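(* Let $\mathfrak a\subset K$ be a fractional $A_{\infty_1}$-ideal having an $\mathbb F_q$-basis $(\alpha_0=1,\alpha_1,\alpha_2,\dots)$ with $1<|\alpha_1|<|\alpha_2|<\cdots$. For $i\ge1$ and $m\in\mathbb N$ set \[\Omega_i^{\mathfrak a}(m)=\sum_{(c_0,\dots,c_{i-1})\in\mathbb F_q^i}\big(c_0+c_1\alpha_1+\dots+c_{i-1}\alpha_{i-1}+\alpha_i\big)^{-m}.\] Then for every $n\in\mathbb N$, $n\ge1$: (1) $\displaystyle\Omega_1^{\mathfrak a}(q^n-1)=\frac{\alpha_1^{q^n}-\alpha_1}{\prod_{c\in\mathbb F_q}(c+\alpha_1^{q^n})}$ and $|\Omega_1^{\mathfrak a}(q^n-1)|=|\alpha_1|^{q^n(1-q)}$; (2) for all $i\ge1$, $|\Omega_i^{\mathfrak a}(q^n-1)|\le|\alpha_i|^{q^n(1-q)}$.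
   Context: Let $q$ be a prime power, $k=\mathbb F_q(T)$, $A=\mathbb F_q[T]$, $k_\infty=\mathbb F_q((1/T))$ with $|x|=q^{\deg_T x}$. Let $f\in k_\infty\setminus k$ be a root of $X^2-aX-b$ with $a\in A$ monic, $d=\deg_T a\ge1$, $b\in\mathbb F_q^*$, $|f|=q^d$. Let $K=k(f)\subset k_\infty$ (absolute values of elements of $K$ are computed in $k_\infty$), and $A_{\infty_1}=\mathbb F_q[f,fT,\dots,fT^{d-1}]$ the ring of elements of $K$ regular away from the place induced by $K\subset k_\infty$. *)

(* Defs.v *)
From HB Require Import structures.
From mathcomp Require Import all_boot all_order all_algebra.
From mathcomp Require Import reals.
Set Implicit Arguments. Unset Strict Implicit. Unset Printing Implicit Defensive.
Import Order.TTheory GRing.Theory Num.Theory.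
Local Open Scope ring_scope.

(* The ambient field L (a model of k_oo = F_q((1/T))) receives F_q through
   [iota]; [T] is the element T of L. *)

Definition evT (F : finFieldType) (L : fieldType) (iota : {rmorphism F -> L})
  (T : L) (p : {poly F}) : L := (map_poly iota p).[T].

Definition in_k (F : finFieldType) (L : fieldType) (iota : {rmorphism F -> L})
  (T x : L) : Prop :=
  exists p r : {poly F}, evT iota T r != 0 /\ x = evT iota T p / evT iota T r.

(* x lies in K = k(f) (f quadratic over k) *)
Definition in_K (F : finFieldType) (L : fieldType) (iota : {rmorphism F -> L})
  (T f x : L) : Prop :=
  exists u v : L, in_k iota T u /\ in_k iota T v /\ x = u + v * f.

Inductive in_Ainf1 (F : finFieldType) (L : fieldType) (iota : {rmorphism F -> L})
  (T f : L) (d : nat) : L -> Prop :=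
| Ainf1_const (c : F) : in_Ainf1 iota T f d (iota c)
| Ainf1_gen (j : nat) : (j < d)%N -> in_Ainf1 iota T f d (f * T ^+ j)
| Ainf1_add (x y : L) : in_Ainf1 iota T f d x -> in_Ainf1 iota T f d y ->
    in_Ainf1 iota T f d (x + y)
| Ainf1_mul (x y : L) : in_Ainf1 iota T f d x -> in_Ainf1 iota T f d y ->
    in_Ainf1 iota T f d (x * y).

Definition is_nonarch_abs (R : realType) (L : fieldType) (abs : L -> R) : Prop :=
  [/\ forall x, 0 <= abs x,
      forall x, (abs x == 0) = (x == 0),
      forall x y, abs (x * y) = abs x * abs y &
      forall x y, abs (x + y) <= Num.max (abs x) (abs y)].

Definition abs_complete (R : realType) (L : fieldType) (abs : L -> R) : Prop :=
  forall u : nat -> L,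
    (forall e : R, 0 < e -> exists N, forall m n, (N <= m)%N -> (N <= n)%N ->
        abs (u m - u n) < e) ->
    exists l, forall e : R, 0 < e -> exists N, forall n, (N <= n)%N ->
        abs (u n - l) < e.

Definition k_dense (R : realType) (F : finFieldType) (L : fieldType)
  (iota : {rmorphism F -> L}) (T : L) (abs : L -> R) : Prop :=
  forall (x : L) (e : R), 0 < e -> exists y, in_k iota T y /\ abs (x - y) < e.

(* (L, abs, iota, T) is (an isometric copy of) k_oo = F_q((1/T)) with |x| = q^{deg_T x} *)
Definition is_k_infty (R : realType) (F : finFieldType) (L : fieldType)
  (iota : {rmorphism F -> L}) (T : L) (abs : L -> R) : Prop :=
  [/\ is_nonarch_abs abs,
      forall c : F, c != 0 -> abs (iota c) = 1,
      abs T = (#|F|)%:R,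
      abs_complete abs &
      k_dense iota T abs].

Definition frac_Ainf1_ideal (F : finFieldType) (L : fieldType)
  (iota : {rmorphism F -> L}) (T f : L) (d : nat) (P : L -> Prop) : Prop :=
  [/\ forall x, P x -> in_K iota T f x,
      forall x y, P x -> P y -> P (x + y),
      forall r x, in_Ainf1 iota T f d r -> P x -> P (r * x),
      exists x, P x /\ x != 0 &
      exists c, [/\ in_Ainf1 iota T f d c, c != 0 &
                    forall x, P x -> in_Ainf1 iota T f d (c * x)]].

Definition is_Fq_basis (F : finFieldType) (L : fieldType)
  (iota : {rmorphism F -> L}) (P : L -> Prop) (alpha : nat -> L) : Prop :=
  [/\ alpha 0%N = 1,
      forall (n : nat) (c : nat -> F),
        \sum_(j < n) iota (c j) * alpha j = 0 -> forall j, (j < n)%N -> c j = 0 &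
      forall x, P x <-> exists (n : nat) (c : nat -> F),
        x = \sum_(j < n) iota (c j) * alpha j].

Definition Omega (F : finFieldType) (L : fieldType) (iota : {rmorphism F -> L})
  (alpha : nat -> L) (i m : nat) : L :=
  \sum_(c : {ffun 'I_i -> F}) (\sum_(j < i) iota (c j) * alpha j + alpha i) ^- m.

(* Main.v *)
Require Import Defs.
From HB Require Import structures.
From mathcomp Require Import all_boot all_order all_algebra.
From mathcomp Require Import reals.
From mathcomp Require Import fingroup finalg finfield abelian pgroup.
From mathcomp Require Import ring lra zify.
Set Implicit Arguments. Unset Strict Implicit. Unset Printing Implicit Defensive.
Import Order.TTheory GRing.Theory Num.Theory.
Local Open Scope ring_scope.



Section Alg.
Variables (F : finFieldType) (L : fieldType) (iota : {rmorphism F -> L}).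
Local Notation q := #|F|.

Lemma q_gt1 : (1 < q)%N. Proof. exact: finNzRing_gt1. Qed.

Lemma char_data : exists p e, [/\ p \in [pchar L], q = (p ^ e)%N & (0 < e)%N].
Proof.
have [p pr_p pF] := finPcharP F.
have pL : p \in [pchar L].
  rewrite inE pr_p /=. have := pF; rewrite inE => /andP[_ /eqP h].
  by rewrite -(rmorph_nat iota) h rmorph0.
have := abelem_pgroup (fin_ring_pchar_abelem pF).
rewrite /pgroup cardsT => /p_natP[e he].
exists p, e; split => //. case: e he => // he; have := q_gt1; rewrite he; done.
Qed.

Lemma pnat_card_L : [pchar L].-nat q.
Proof.
have [p [e [pL -> _]]] := char_data.
by rewrite pnatX (pnatE _ (pcharf_prime pL)) pL.
Qed.

Lemma qL0 : (q%:R : L) = 0.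
Proof.
have [p [e [pL -> e0]]] := char_data.
by rewrite natrX (pcharf0 pL) expr0n; case: e e0.
Qed.

Lemma frobD k (x y : L) : (x + y) ^+ (q ^ k) = x ^+ (q ^ k) + y ^+ (q ^ k).
Proof. by apply: exprDn_pchar; rewrite pnatX pnat_card_L. Qed.

Lemma frobC k (c : F) : iota c ^+ (q ^ k) = iota c.
Proof.
rewrite -rmorphXn; congr (iota _); elim: k => [|k IH]; first by rewrite expr1.
by rewrite expnSr exprM IH expf_card.
Qed.

Lemma frobZ k (c : F) (x : L) : (iota c * x) ^+ (q ^ k) = iota c * x ^+ (q ^ k).
Proof. by rewrite exprMn frobC. Qed.

Lemma frobN k (x : L) : (- x) ^+ (q ^ k) = - x ^+ (q ^ k).
Proof. by rewrite -mulN1r -(rmorphN1 iota) frobZ rmorphN1 mulN1r. Qed.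

End Alg.



Section Alg2.
Variables (F : finFieldType) (L : fieldType) (iota : {rmorphism F -> L}).
Local Notation q := #|F|.

Lemma genpolyL : \prod_(c : F) ('X + (iota c)%:P) = 'X^q - 'X :> {poly L}.
Proof.
have := congr1 (map_poly iota) (finField_genPoly F).
rewrite rmorphB /= map_polyXn map_polyX rmorph_prod /= => ->.
rewrite (reindex_inj (@oppr_inj F)) /=.
apply: eq_bigr => c _; rewrite map_polyXsubC rmorphN.
by rewrite polyCN.
Qed.

Lemma logder (s : seq L) (W : L) :
  (\prod_(x <- s) ('X + x%:P)).[W] != 0 ->
  \sum_(x <- s) (W + x)^-1 = (\prod_(x <- s) ('X + x%:P))^`().[W] / (\prod_(x <- s) ('X + x%:P)).[W].
Proof.
elim: s => [|a s IH]; first by rewrite !big_nil derivC horner0 mul0r.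
rewrite !big_cons derivM !hornerE /= => /[dup] H; rewrite mulf_eq0 negb_or => /andP[Ha Hs].
rewrite IH // derivD derivX derivC addr0 !hornerE /=.
by field; apply/andP.
Qed.

Lemma sum_inv (W : L) : W ^+ q - W != 0 -> \sum_(c : F) (W + iota c)^-1 = - (W ^+ q - W)^-1.
Proof.
move=> H.
have E : \sum_(c : F) (W + iota c)^-1 = \sum_(x <- map iota (enum F)) (W + x)^-1.
  by rewrite big_map big_enum.
have P : \prod_(x <- map iota (enum F)) ('X + x%:P) = 'X^q - 'X :> {poly L}.
  by rewrite big_map big_enum genpolyL.
rewrite E logder P; last by rewrite !hornerE.
rewrite derivB derivXn derivX !hornerE hornerMn -mulr_natr (qL0 iota) mulr0 sub0r.
by rewrite mulNr mul1r.
Qed.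


Lemma prodW (W : L) : \prod_(c : F) (W + iota c) = W ^+ q - W.
Proof.
have := congr1 (horner^~ W) (genpolyL). rewrite horner_prod !hornerE => <-.
by apply: eq_bigr => c _; rewrite !hornerE.
Qed.

Lemma prodZ (Z a : L) : \prod_(c : F) (Z + iota c * a) = Z ^+ q - a ^+ q.-1 * Z.
Proof.
have q1 := q_gt1 F.
have [->|a0] := eqVneq a 0.
  have -> : (0:L) ^+ q.-1 = 0.
    by rewrite expr0n; case: (q) q1 => [|[|]].
  rewrite mul0r subr0; under eq_bigr do rewrite mulr0 addr0.
  by rewrite prodr_const.
rewrite (eq_bigr (fun c => a * (Z / a + iota c))); last first.
  by move=> c _; rewrite mulrDr [a * (Z / a)]mulrC divfK // mulrC.
rewrite big_split /= prodr_const prodW.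
have -> : #|[pred _ : F | true]| = q by [].
move: q1; case: q => [|r] //= _.
have ar : a ^+ r != 0 by rewrite expf_neq0.
by rewrite !exprS !exprMn exprVn; field; rewrite a0 ar.
Qed.

Lemma scaleq (Z a : L) : a != 0 -> Z ^+ q - a ^+ q.-1 * Z = a ^+ q * ((Z / a) ^+ q - Z / a).
Proof.
move=> a0; have q1 := q_gt1 F.
move: q1; case: q => [|r] //= _.
have ar : a ^+ r != 0 by rewrite expf_neq0.
by rewrite !exprS !exprMn exprVn; field; rewrite a0 ar.
Qed.

Lemma sum_frac (Z a u b : L) : a != 0 -> Z ^+ q - a ^+ q.-1 * Z != 0 ->
  \sum_(c : F) (u + iota c * b) / (Z + iota c * a) =
  (u - b * Z / a) * (- a ^+ q.-1) / (Z ^+ q - a ^+ q.-1 * Z).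
Proof.
move=> a0 D0.
have q1 := q_gt1 F.
rewrite scaleq // in D0 *.
set W := Z / a in D0 *.
have HW : W ^+ q - W != 0 by apply: contraNneq D0 => ->; rewrite mulr0.
have -> : \sum_(c : F) (u + iota c * b) / (Z + iota c * a) =
   \sum_(c : F) ((u - b * W) / a * (W + iota c)^-1 + b / a).
  apply: eq_bigr => c _.
  have Wc : W + iota c != 0.
    apply: contraNneq HW => h. rewrite -prodW (bigD1 c) //= h mul0r //.
  have Ze : Z + iota c * a = a * (W + iota c) by rewrite /W mulrDr [a * (Z / a)]mulrC divfK // mulrC.
  have Zc : Z + iota c * a != 0 by rewrite Ze mulf_neq0.
  rewrite Ze /W; field; rewrite a0 ?Zc //.
rewrite big_split /= -mulr_sumr sum_inv // sumr_const -mulr_natr (qL0 iota) mulr0 addr0.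
have aq : a ^+ q != 0 by rewrite expf_neq0.
move: aq; rewrite /W.
move: q1 HW; rewrite /W; case: q => [|r] //= _ HW ar.
have ar' : a ^+ r != 0 by rewrite expf_neq0.
have H2 : Z * (Z / a) ^+ r - Z != 0.
  have e : (Z / a) ^+ r.+1 - Z / a = (Z * (Z / a) ^+ r - Z) / a.
    by rewrite exprS; field; rewrite a0.
  by apply: contraNneq HW => h; rewrite e h mul0r.
rewrite !exprS /=. field. by rewrite a0 H2 ar'.
Qed.

End Alg2.



Section Main.
Variables (F : finFieldType) (L : fieldType) (iota : {rmorphism F -> L}).
Variables (alpha : nat -> L) (n : nat).
Local Notation q := #|F|.
Local Notation N := (q ^ n)%N.
Local Notation m := N.-1.
Definition w j := alpha j ^+ N.

Fixpoint ETD (j : nat) : (L -> L) * (L -> L) * L :=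
  match j with
  | 0 => (fun Y => Y, fun _ => 0, 1)
  | j'.+1 => let: (E, T, D) := ETD j' in
     let a := E (w j') in let b := alpha j' - T (w j') in
     (fun Y => E Y ^+ q - a ^+ q.-1 * E Y, fun Y => T Y + b / a * E Y, - D * a ^+ q.-1)
  end.
Definition Ef j := (ETD j).1.1.
Definition Tf j := (ETD j).1.2.
Definition Df j := (ETD j).2.

Lemma Ef0 Y : Ef 0 Y = Y. Proof. by []. Qed.
Lemma Tf0 Y : Tf 0 Y = 0. Proof. by []. Qed.
Lemma Df0 : Df 0 = 1. Proof. by []. Qed.
Lemma EfS j Y : Ef j.+1 Y = Ef j Y ^+ q - Ef j (w j) ^+ q.-1 * Ef j Y.
Proof. by rewrite /Ef /=; case: (ETD j) => [[E T] D]. Qed.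
Lemma TfS j Y : Tf j.+1 Y = Tf j Y + (alpha j - Tf j (w j)) / Ef j (w j) * Ef j Y.
Proof. by rewrite /Ef /Tf /=; case: (ETD j) => [[E T] D]. Qed.
Lemma DfS j : Df j.+1 = - Df j * Ef j (w j) ^+ q.-1.
Proof. by rewrite /Ef /Df /=; case: (ETD j) => [[E T] D]. Qed.

Definition linF (f : L -> L) := forall y z c, f (y + iota c * z) = f y + iota c * f z.

Lemma Ef_lin j : linF (Ef j).
Proof.
elim: j => [|j IH] y z c; first by [].
rewrite !EfS IH.
have := frobD iota 1 (Ef j y) (iota c * Ef j z); rewrite expn1 => ->.
have := frobZ iota 1 c (Ef j z); rewrite expn1 => ->.
ring.
Qed.

Lemma Tf_lin j : linF (Tf j).
Proof.
elim: j => [|j IH] y z c; first by rewrite !Tf0 mulr0 addr0.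
by rewrite !TfS IH Ef_lin; ring.
Qed.

Definition Gsum j (y : L) : L :=
  \sum_(c : {ffun 'I_j -> F}) (\sum_(l < j) iota (c l) * alpha l + y) ^- m.

Lemma GsumS j y : Gsum j.+1 y = \sum_(c0 : F) Gsum j (y + iota c0 * alpha j).
Proof.
rewrite /Gsum pair_big /=.
pose phi (p : F * {ffun 'I_j -> F}) : {ffun 'I_j.+1 -> F} :=
  [ffun l => if unlift ord_max l is Some l' then p.2 l' else p.1].
pose psi (f : {ffun 'I_j.+1 -> F}) : F * {ffun 'I_j -> F} :=
  (f ord_max, [ffun l' => f (lift ord_max l')]).
rewrite (reindex phi); last first.
  exists psi => [[c0 g] _|f _].
    rewrite /psi /phi /= ffunE unlift_none; congr (_, _).
    by apply/ffunP => l; rewrite !ffunE liftK.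
  rewrite /psi /phi /=; apply/ffunP => l; rewrite !ffunE.
  by case: unliftP => [l' ->|->]; rewrite ?ffunE.
apply: eq_bigr => [[c0 g]] _ /=.
rewrite big_ord_recr /= /phi ffunE unlift_none /=.
congr (_ ^- _); rewrite [y + _]addrC addrA; congr (_ + _ + _).
apply: eq_bigr => l _; rewrite ffunE.
have E : widen_ord (leqnSn j) l = lift ord_max l.
  apply/val_inj => /=.
  by rewrite /bump leqNgt ltn_ord add0n.
rewrite E liftK //.
Qed.


Lemma N_gt0 : (0 < N)%N. Proof. by rewrite expn_gt0 (ltnW (q_gt1 F)). Qed.

Lemma frobN_lin y c z : (y + iota c * z) ^+ N = y ^+ N + iota c * z ^+ N.
Proof. by rewrite (frobD iota n) (frobZ iota n). Qed.

Lemma Gformula (Hw : forall l, Ef l (w l) != 0) j y :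
  Ef j (y ^+ N) != 0 -> Gsum j y = (y - Tf j (y ^+ N)) * Df j / Ef j (y ^+ N).
Proof.
elim: j y => [|j IH] y.
  rewrite Ef0 Tf0 Df0 => Hy.
  rewrite /Gsum; under eq_bigr do rewrite big_ord0 add0r.
  rewrite sumr_const card_ffun card_ord expn0 mulr1n subr0 mulr1.
  have y0 : y != 0 by apply: contraNneq Hy => ->; rewrite expr0n eqn0Ngt N_gt0.
  move: Hy; have [k ->] : exists k, N = k.+1 by exists N.-1; rewrite prednK // N_gt0.
  move=> Hy /=; rewrite exprS; field; by rewrite y0 expf_neq0.
move=> Hy.
set Y := y ^+ N in Hy *.
set a := Ef j (w j).
set b := alpha j - Tf j (w j).
have a0 : a != 0 := Hw j.
have HE : Ef j.+1 Y = \prod_(c : F) (Ef j Y + iota c * a) by rewrite EfS prodZ.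
rewrite GsumS.
have -> : \sum_(c0 : F) Gsum j (y + iota c0 * alpha j) =
   \sum_(c0 : F) ((y - Tf j Y) + iota c0 * b) * Df j / (Ef j Y + iota c0 * a).
  apply: eq_bigr => c _.
  have Hc : Ef j Y + iota c * a != 0.
    by move: Hy; rewrite HE (bigD1 c) //= mulf_eq0 negb_or => /andP[].
  rewrite IH frobN_lin -/Y; last by rewrite (Ef_lin j).
  rewrite (Tf_lin j) (Ef_lin j) -/(w j) -/a -/b.
  rewrite /b; congr (_ * _ / _); move: (iota c) => t; ring.
rewrite -[LHS]/(\sum_(c0 : F) ((y - Tf j Y) + iota c0 * b) * Df j / (Ef j Y + iota c0 * a)).
under eq_bigr do rewrite mulrAC.
rewrite -mulr_suml sum_frac //; last by rewrite -(prodZ iota) -HE.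
rewrite EfS TfS DfS -/a -/b.
have D : Ef j Y ^+ q - a ^+ q.-1 * Ef j Y != 0 by rewrite -EfS.
field; rewrite D a0 //.
Qed.

End Main.



Section Abs.
Variables (R : realType) (L : fieldType) (abs : L -> R).
Hypothesis habs : is_nonarch_abs abs.

Lemma abs_ge0 x : 0 <= abs x. Proof. by case: habs. Qed.
Lemma abs_eq0 x : (abs x == 0) = (x == 0). Proof. by case: habs. Qed.
Lemma absM x y : abs (x * y) = abs x * abs y. Proof. by case: habs. Qed.
Lemma abs_ultra x y : abs (x + y) <= Num.max (abs x) (abs y). Proof. by case: habs. Qed.
Lemma abs0 : abs 0 = 0. Proof. by apply/eqP; rewrite abs_eq0. Qed.
Lemma abs1 : abs 1 = 1.
Proof.
have h : abs 1 * abs 1 = abs 1 by rewrite -absM mulr1.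
have nz : abs 1 != 0 by rewrite abs_eq0 oner_eq0.
by apply: (mulfI nz); rewrite h mulr1.
Qed.
Lemma absN1 : abs (-1) = 1.
Proof.
have h : abs (-1) * abs (-1) = 1 by rewrite -absM mulrNN mulr1 abs1.
have g := abs_ge0 (-1).
have : (abs (-1) - 1) * (abs (-1) + 1) == 0 by rewrite mulrBl !mulrDr h; apply/eqP; ring.
rewrite mulf_eq0 => /orP[/eqP|/eqP]; first by move/subr0_eq.
by move=> h2; exfalso; lra.
Qed.
Lemma absN x : abs (- x) = abs x. Proof. by rewrite -mulN1r absM absN1 mul1r. Qed.
Lemma absX x k : abs (x ^+ k) = abs x ^+ k.
Proof. by elim: k => [|k IH]; rewrite ?expr0 ?abs1 // !exprS absM IH. Qed.
Lemma absV x : abs (x^-1) = (abs x)^-1.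
Proof.
have [->|x0] := eqVneq x 0; first by rewrite invr0 abs0 invr0.
have nz : abs x != 0 by rewrite abs_eq0.
by apply: (mulfI nz); rewrite -absM divff // abs1 divff.
Qed.
Lemma absD x y : abs (x / y) = abs x / abs y. Proof. by rewrite absM absV. Qed.

Lemma abs_strict x y : abs y < abs x -> abs (x + y) = abs x.
Proof.
move=> h; apply/eqP; rewrite eq_le; apply/andP; split.
  by apply: le_trans (abs_ultra x y) _; rewrite ge_max lexx ltW.
have := abs_ultra (x + y) (- y); rewrite addrK absN.
rewrite le_max => /orP[//|]; by rewrite leNgt h.
Qed.

Lemma abs_bound x y K M : 0 <= K -> abs x * K <= M -> abs y * K <= M -> abs (x + y) * K <= M.
Proof.
move=> K0 hx hy; apply: le_trans (ler_wpM2r K0 (abs_ultra x y)) _.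
by case: (leP (abs x) (abs y)) => _; rewrite ?maxEle ?maxElt //=; case: ifP.
Qed.

End Abs.



Section Anal.
Variables (R : realType) (F : finFieldType) (L : fieldType) (iota : {rmorphism F -> L}).
Variables (abs : L -> R) (alpha : nat -> L) (n : nat).
Hypothesis habs : is_nonarch_abs abs.
Hypothesis A0 : alpha 0 = 1.
Hypothesis hmono : forall j, abs (alpha j) < abs (alpha j.+1).
Local Notation q := #|F|.
Local Notation N := (q ^ n)%N.
Local Notation E := (Ef F alpha n).
Local Notation T := (Tf F alpha n).
Local Notation Dd := (Df F alpha n).
Local Notation ww := (w F alpha n).

Definition B j := abs (alpha j) ^+ N.

Lemma alpha_ge1 j : 1 <= abs (alpha j).
Proof.
elim: j => [|j IH]; first by rewrite A0 abs1.
by apply: le_trans IH (ltW (hmono j)).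
Qed.

Lemma alpha_mono l j : (l < j)%N -> abs (alpha l) < abs (alpha j).
Proof.
elim: j => [//|j IH]; rewrite ltnS leq_eqVlt => /orP[/eqP ->|/IH h]; first exact: hmono.
exact: lt_trans h (hmono j).
Qed.

Lemma Bw j : abs (ww j) = B j. Proof. by rewrite /w absX. Qed.

Lemma B_ge1 j : 1 <= B j. Proof. by rewrite /B exprn_ege1 // alpha_ge1. Qed.
Lemma B_gt0 j : 0 < B j. Proof. exact: lt_le_trans ltr01 (B_ge1 j). Qed.

Lemma B_mono l j : (l < j)%N -> B l < B j.
Proof.
move=> h; rewrite /B ltrXn2r ?alpha_mono //.
  by rewrite -lt0n (N_gt0 F n).
exact: le_trans ler01 (alpha_ge1 l).
Qed.

Lemma alpha_le_B j : abs (alpha j) <= B j.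
Proof.
rewrite /B -{1}(expr1 (abs (alpha j))); apply: ler_weXn2l; first exact: alpha_ge1.
exact: (N_gt0 F n).
Qed.

Lemma E_abs j Y : (forall l, (l < j)%N -> B l < abs Y) -> abs (E j Y) = abs Y ^+ (q ^ j).
Proof.
elim: j Y => [|j IH] Y hY; first by rewrite Ef0 expn0 expr1.
rewrite EfS.
have hE : abs (E j Y) = abs Y ^+ (q ^ j) by apply: IH => l hl; apply: hY; exact: ltnW.
have ha : abs (E j (ww j)) = B j ^+ (q ^ j).
  by rewrite IH -?Bw // => l hl; rewrite Bw; exact: B_mono.
have Y0 : 0 <= abs Y := abs_ge0 habs Y.
have hlt : abs (E j (ww j)) < abs (E j Y).
  rewrite ha hE ltrXn2r ?hY //.
    by rewrite expn_eq0 gtn_eqF // (ltnW (q_gt1 F)).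
  exact: le_trans ler01 (B_ge1 j).
have Ep : 0 < abs (E j Y) by apply: le_lt_trans hlt; exact: (abs_ge0 habs _).
rewrite (abs_strict habs).
  by rewrite (absX habs) hE -exprM expnSr.
rewrite (absN habs) !(absM habs) !(absX habs).
have -> : abs (E j Y) ^+ q = abs (E j Y) ^+ q.-1 * abs (E j Y).
  by rewrite -exprSr prednK // (ltnW (q_gt1 F)).
rewrite ltr_pM2r // ltrXn2r ?(abs_ge0 habs) //.
by rewrite -lt0n -ltnS prednK ?(q_gt1 F) // (ltnW (q_gt1 F)).
Qed.

Lemma Hw l : E l (ww l) != 0.
Proof.
rewrite -(abs_eq0 habs) E_abs; last by move=> l' hl; rewrite Bw; exact: B_mono.
by rewrite Bw expf_neq0 // gt_eqF // B_gt0.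
Qed.


Lemma T1 z : T 1 z = z.
Proof. by rewrite TfS Tf0 Ef0 Ef0 /w A0 expr1n subr0 divr1 mul1r add0r. Qed.

Lemma D1 : Dd 1 = -1.
Proof. by rewrite DfS Df0 Ef0 /w A0 !expr1n mulr1. Qed.

Lemma nat_facts (Q : nat) : (q <= Q)%N ->
  [/\ ((Q - q).+1 + Q * q.-1 = (q * Q - q).+1)%N,
      ((Q - q).+1 + Q + Q * q.-2 = (q * Q - q).+1)%N &
      ((Q - q) + Q * q.-1 = q * Q - q)%N].
Proof.
have := q_gt1 F; case: q => [|[|r]] //= _ hQ.
split; nia.
Qed.

Lemma le_pow (x : R) (a b : nat) : 1 <= x -> (a <= b)%N -> x ^+ a <= x ^+ b.
Proof. by move=> h hab; apply: ler_weXn2l. Qed.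

Lemma le_base (x y : R) (k : nat) : 0 <= x -> x <= y -> x ^+ k <= y ^+ k.
Proof. by move=> h0 h; apply: lerXn2r; rewrite ?inE ?h0 //; apply: le_trans h. Qed.

Lemma TD_bound k :
  (forall z, B k < abs z -> abs (T k.+1 z) * abs (Dd k.+1) <= abs z ^+ (q ^ k.+1 - q).+1)
  /\ abs (Dd k.+1) <= B k ^+ (q ^ k.+1 - q).
Proof.
elim: k => [|k [IHT IHD]].
  rewrite D1 (absN habs) (abs1 habs) expn1 subnn expr0; split => // z _.
  by rewrite T1 mulr1 expr1.
set Q := (q ^ k.+1)%N.
have hQ : (q <= Q)%N by rewrite /Q expnS leq_pmulr // expn_gt0 (ltnW (q_gt1 F)).
have [e1 e2 e3] := nat_facts hQ.
have QS : (q ^ k.+2 = q * Q)%N by rewrite expnS.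
set BB := B k.+1.
have BB1 : 1 <= BB := B_ge1 k.+1.
have BB0 : 0 <= BB by apply: le_trans BB1; exact: ler01.
have Bk : B k < BB := B_mono (ltnSn k).
set Dv := abs (Dd k.+1).
have Dv0 : 0 <= Dv := abs_ge0 habs _.
set a := E k.+1 (ww k.+1).
have ha : abs a = BB ^+ Q.
  rewrite /a E_abs; first by rewrite Bw.
  by move=> l hl; rewrite Bw; apply: B_mono.
have a0 : a != 0 := Hw k.+1.
have DvB : Dv <= BB ^+ (Q - q).
  apply: le_trans IHD _; apply: le_base; [exact: ltW (B_gt0 k)| exact: ltW].
have hD : abs (Dd k.+2) = Dv * BB ^+ (Q * q.-1).
  by rewrite DfS (absM habs) (absN habs) (absX habs) ha -exprM.
rewrite hD QS; split; last first.
  rewrite -e3 exprD; apply: ler_wpM2r => //; exact: exprn_ge0.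
move=> z hz.
have z0 : 0 <= abs z := abs_ge0 habs z.
rewrite TfS -/a.
apply: (abs_bound habs); first by rewrite mulr_ge0 // exprn_ge0.
  rewrite mulrA -e1 exprD; apply: ler_pM.
  - by rewrite mulr_ge0 // abs_ge0.
  - exact: exprn_ge0.
  - by apply: IHT; apply: lt_trans hz.
  - by apply: le_base => //; apply: ltW.
rewrite (absM habs) (absD habs) (E_abs); last first.
  move=> l hl; apply: lt_trans hz; apply: B_mono; done.
set b := alpha k.+1 - T k.+1 (ww k.+1).
have hb : abs b * Dv <= BB ^+ (Q - q).+1.
  apply: (abs_bound habs) => //.
    rewrite exprS; apply: ler_pM => //; [exact: abs_ge0|exact: alpha_le_B].
  have := IHT (ww k.+1); rewrite Bw => h; rewrite (absN habs); exact: h Bk.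
rewrite -/Q.
have -> : abs b / abs a * abs z ^+ Q * (Dv * BB ^+ (Q * q.-1)) =
          (abs b * Dv) * abs z ^+ Q * BB ^+ (Q * q.-2).
  rewrite ha.
  have -> : (Q * q.-1 = Q + Q * q.-2)%N.
    by move: (q_gt1 F); case: (q) => [|[|r]] //= _; rewrite mulnS.
  rewrite exprD; field; rewrite expf_neq0 // gt_eqF // (lt_le_trans ltr01 BB1) //.
rewrite -e2 !exprD; apply: ler_pM.
- by rewrite mulr_ge0 // ?exprn_ge0 // mulr_ge0 // abs_ge0.
- exact: exprn_ge0.
- apply: ler_pM => //.
  + by rewrite mulr_ge0 // abs_ge0.
  + exact: exprn_ge0.
  + apply: le_trans hb _; apply: le_base => //; exact: ltW.
- by apply: le_base => //; apply: ltW.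
Qed.


Lemma Hw' : forall l, E l (ww l) != 0. Proof. exact: Hw. Qed.

Lemma Gf i : Gsum iota alpha n i (alpha i) = (alpha i - T i (ww i)) * Dd i / E i (ww i).
Proof. exact: (Gformula iota Hw' (Hw' i)). Qed.

Lemma part1 : (1 <= n)%N ->
  Gsum iota alpha n 1 (alpha 1) = (alpha 1 ^+ N - alpha 1) / \prod_(c : F) (iota c + alpha 1 ^+ N)
  /\ abs (Gsum iota alpha n 1 (alpha 1)) = (abs (alpha 1) ^+ (N * q.-1))^-1.
Proof.
move=> n1.
have q1 := q_gt1 F.
have q0 : (0 < q)%N := ltnW q1.
have x1 : 1 < abs (alpha 1) by have := hmono 0; rewrite A0 (abs1 habs).
set X := alpha 1 ^+ N.
have EX : E 1 X = X ^+ q - X.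
  by rewrite EfS Ef0 /w A0 expr1n expr1n mul1r.
split.
  rewrite Gf T1 D1 [ww 1]/w -/X EX.
  have -> : \prod_(c : F) (iota c + X) = X ^+ q - X.
    by rewrite -(prodW iota); apply: eq_bigr => c _; rewrite addrC.
  by rewrite mulrN1 opprB.
rewrite Gf T1 D1 mulrN1 (absD habs) (absN habs).
rewrite E_abs; last first.
  by move=> l; rewrite ltnS leqn0 => /eqP ->; rewrite Bw; apply: B_mono.
have Ngt1 : (1 < N)%N by rewrite -(expn0 q) ltn_exp2l.
rewrite addrC (abs_strict habs); last first.
  rewrite (absN habs) Bw /B.
  by rewrite ltr_eXnr.
rewrite (absN habs) Bw /B expn1 exprM.
set y := abs (alpha 1) ^+ N.
have y0 : y != 0 by rewrite expf_neq0 // gt_eqF // (lt_trans ltr01 x1).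
have yq : y ^+ q.-1 != 0 by rewrite expf_neq0.
by rewrite -{1}(prednK q0) exprS; field; rewrite y0 yq.
Qed.

Lemma part2 i : (1 <= i)%N ->
  abs (Gsum iota alpha n i (alpha i)) <= (abs (alpha i) ^+ (N * q.-1))^-1.
Proof.
have q1 := q_gt1 F.
have q0 : (0 < q)%N := ltnW q1.
rewrite Gf exprM.
case: i => [//|k] _.
have [hT hD] := TD_bound k.
set Q := (q ^ k.+1)%N.
have BB1 : 1 <= B k.+1 := B_ge1 k.+1.
have BB0 : 0 < B k.+1 := lt_le_trans ltr01 BB1.
have Bk : B k < B k.+1 := B_mono (ltnSn k).
have hQ : (q <= Q)%N by rewrite /Q expnS leq_pmulr // expn_gt0 q0.
rewrite (absD habs) (absM habs) E_abs; last first.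
  by move=> l hl; rewrite Bw; apply: B_mono.
rewrite Bw -/Q -/(B k.+1).
have hnum : abs (alpha k.+1 - T k.+1 (ww k.+1)) * abs (Dd k.+1) <= B k.+1 ^+ (Q - q).+1.
  apply: (abs_bound habs); first exact: abs_ge0 habs _.
    rewrite exprS; apply: ler_pM; [exact: abs_ge0 habs _|exact: abs_ge0 habs _| |].
      exact: alpha_le_B.
    apply: le_trans hD _; apply: le_base => //; [exact: ltW (B_gt0 k)| exact: ltW].
  have := hT (ww k.+1); rewrite Bw => h; rewrite (absN habs); exact: h Bk.
have -> : (B k.+1 ^+ q.-1)^-1 = B k.+1 ^+ (Q - q).+1 / B k.+1 ^+ Q.
  have eQ : B k.+1 ^+ Q = B k.+1 ^+ (Q - q).+1 * B k.+1 ^+ q.-1.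
    by rewrite -exprD addSn -addnS prednK // subnK.
  have nz : B k.+1 != 0 by rewrite gt_eqF.
  have n1 : B k.+1 ^+ (Q - q).+1 != 0 by rewrite expf_neq0.
  have n2 : B k.+1 ^+ q.-1 != 0 by rewrite expf_neq0.
  by rewrite eQ; field; rewrite n1 n2.
by apply: ler_wpM2r; [rewrite invr_ge0 exprn_ge0 // ltW | exact: hnum].
Qed.

End Anal.



Lemma exprz_conv (R : realType) (x : R) (N q : nat) : (0 < q)%N ->
  x ^ ((N%:Z) * (1 - (q%:Z))) = (x ^+ (N * q.-1))^-1.
Proof.
move=> q0.
have -> : (N%:Z * (1 - q%:Z)) = - ((N * q.-1)%N%:Z).
  rewrite -(prednK q0) PoszM /=. set r := q.-1. rewrite -addn1 PoszD. ring.
by rewrite -exprz_inv; exact: exprVn.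
Qed.

Theorem lemma5 (R : realType) (F : finFieldType) (L : fieldType)
  (iota : {rmorphism F -> L}) (T : L) (abs : L -> R)
  (a : {poly F}) (b : F) (f : L) (P : L -> Prop) (alpha : nat -> L) :
  is_k_infty iota T abs ->
  a \is monic -> (1 <= (size a).-1)%N -> b != 0 ->
  f ^+ 2 - evT iota T a * f - iota b = 0 ->
  ~ in_k iota T f ->
  abs f = (#|F|)%:R ^+ (size a).-1 ->
  frac_Ainf1_ideal iota T f (size a).-1 P ->
  is_Fq_basis iota P alpha ->
  1 < abs (alpha 1%N) ->
  (forall i, (1 <= i)%N -> abs (alpha i) < abs (alpha i.+1)) ->
  forall n : nat, (1 <= n)%N ->
    (Omega iota alpha 1 (#|F| ^ n).-1 =
       (alpha 1%N ^+ (#|F| ^ n) - alpha 1%N)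
         / \prod_(c : F) (iota c + alpha 1%N ^+ (#|F| ^ n))
     /\ abs (Omega iota alpha 1 (#|F| ^ n).-1) =
          abs (alpha 1%N) ^ ((#|F| ^ n)%:Z * (1 - (#|F|)%:Z)))
    /\ (forall i, (1 <= i)%N ->
          abs (Omega iota alpha i (#|F| ^ n).-1) <=
            abs (alpha i) ^ ((#|F| ^ n)%:Z * (1 - (#|F|)%:Z))).
Proof.
move=> [habs _ _ _ _] _ _ _ _ _ _ _ [A0 _ _] h1 hinc n n1.
have hmono : forall j, abs (alpha j) < abs (alpha j.+1).
  by case => [|j]; [rewrite A0 (abs1 habs) | apply: hinc].
have q0 : (0 < #|F|)%N := ltnW (q_gt1 F).
have [p1 p2] := part1 iota habs A0 hmono n1.
split; first by split; rewrite // exprz_conv.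
move=> i i1; rewrite exprz_conv //.
exact: (part2 iota n habs A0 hmono i1).
Qed.
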